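(* Let $\Gamma$ be an oriented path in $\mathbb C$ which is an interval of a straight line, let $f$ be a polynomial of degree at most $m\in\mathbb Z_+$, and let $g:\Gamma\to\mathbb C$ be a continuous map taking values in a line in $\mathbb C$ passing through $0$, such that $f(z)+g(z)\ne0$ for every $z\in\Gamma$. Then $w(f+g,\Gamma)<\frac{m+1}{2}$.
   Context: An oriented path $\Gamma$ with source $s(\Gamma)$ and end $e(\Gamma)$ is a set $\Gamma=\phi([a,b])$ for a continuous $\phi:[a,b]\to\mathbb C$ with $\phi(a)=s(\Gamma)$, $\phi(b)=e(\Gamma)$, $\phi$ injective on $(a,b)$. For continuous $F:\Gamma\to\mathbb C\setminus\{0\}$, choose such a parametrization $\phi$ and a continuous $\psi:[a,b]\to\mathbb R$ with $F(\phi(t))/|F(\phi(t))|=e^{i\psi(t)}$; the winding number of $F$ along $\Gamma$ is $w(F,\Gamma)=\frac{\psi(b)-\psi(a)}{2\pi}$ (independent of choices). *)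

(* Defs.v *)
From Stdlib Require Import Reals.
From Coquelicot Require Import Coquelicot.
Open Scope R_scope.

Fixpoint Cpown (z : C) (k : nat) : C :=
  match k with O => RtoC 1 | S k' => Cmult z (Cpown z k') end.

Fixpoint poly_eval (c : nat -> C) (m : nat) (z : C) : C :=
  match m with
  | O => c O
  | S m' => Cplus (poly_eval c m' z) (Cmult (c m) (Cpown z m))
  end.

Definition poly_deg_le (m : nat) (f : C -> C) : Prop :=
  exists c : nat -> C, forall z, f z = poly_eval c m z.

Definition seg_param (a b : C) (t : R) : C := Cplus a (Cmult (RtoC t) (Cminus b a)).

Definition on_seg (a b : C) (z : C) : Prop :=
  exists t : R, 0 <= t <= 1 /\ z = seg_param a b t.

Definition continuous_on_seg (a b : C) (g : C -> C) : Prop :=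
  forall z, on_seg a b z ->
    filterlim g (within (on_seg a b) (locally z)) (locally (g z)).

Definition is_arg_lift (F : C -> C) (a b : C) (psi : R -> R) : Prop :=
  (forall t, 0 <= t <= 1 ->
     filterlim psi (within (fun s => 0 <= s <= 1) (locally t)) (locally (psi t))) /\
  (forall t, 0 <= t <= 1 ->
     let w := F (seg_param a b t) in
     Cmult (RtoC (/ Cmod w)) w = (cos (psi t), sin (psi t))).

Definition winding_from_lift (psi : R -> R) : R := (psi 1 - psi 0) / (2 * PI).

(* Main.v *)
Require Import Defs.
From Stdlib Require Import Reals Lra Lia.
From Coquelicot Require Import Coquelicot.
Open Scope R_scope.

Fixpoint RP (m : nat) (P : R -> R) : Prop :=
  match m with
  | O => exists c, forall t, P t = c
  | S m' => exists c Q, RP m' Q /\ forall t, P t = c + t * Q t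
  end.

Lemma RP_ext m P Q : (forall t, P t = Q t) -> RP m P -> RP m Q.
Proof.
  destruct m; simpl.
  - intros H [c Hc]; exists c; intro t; rewrite <- H; auto.
  - intros H [c [G [HG Hc]]]; exists c, G; split; auto; intro t; rewrite <- H; auto.
Qed.

Lemma RP_const n c : RP n (fun _ => c).
Proof.
  revert c; induction n; intro c; simpl.
  - exists c; auto.
  - exists c, (fun _ => 0); split; [apply IHn | intro; ring].
Qed.

Lemma RP_lift m P : RP m P -> RP (S m) P.
Proof.
  revert P; induction m; intros P H.
  - destruct H as [c Hc]; exists c, (fun _ => 0); split.
    + exists 0; auto.
    + intro t; rewrite Hc; ring.
  - destruct H as [c [G [HG Hc]]]; exists c, G; split; auto.
Qed.

Lemma RP_plus m P Q : RP m P -> RP m Q -> RP m (fun t => P t + Q t).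
Proof.
  revert P Q; induction m; intros P Q HP HQ.
  - destruct HP as [c Hc], HQ as [d Hd]; exists (c + d); intro; rewrite Hc, Hd; auto.
  - destruct HP as [c [G [HG Hc]]], HQ as [d [G' [HG' Hd]]].
    exists (c + d), (fun t => G t + G' t); split; auto.
    intro t; rewrite Hc, Hd; ring.
Qed.

Lemma RP_scal m k P : RP m P -> RP m (fun t => k * P t).
Proof.
  revert P; induction m; intros P HP.
  - destruct HP as [c Hc]; exists (k * c); intro; rewrite Hc; auto.
  - destruct HP as [c [G [HG Hc]]].
    exists (k * c), (fun t => k * G t); split; auto.
    intro t; rewrite Hc; ring.
Qed.

Lemma RP_mul_lin m a b P : RP m P -> RP (S m) (fun t => (a + t * b) * P t).
Proof.
  revert P; induction m; intros P HP.
  - destruct HP as [c Hc]. exists (a * c), (fun _ => b * c); split.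
    + exists (b * c); auto.
    + intro t; rewrite Hc; ring.
  - destruct HP as [c [G [HG Hc]]].
    exists (a * c), (fun t => b * c + (a + t * b) * G t); split.
    + apply RP_plus; [apply RP_const | apply IHm; auto].
    + intro t; rewrite Hc; ring.
Qed.

Lemma RP_factor m P : RP (S m) P -> forall t0, exists Q, RP m Q /\
  forall t, P t - P t0 = (t - t0) * Q t.
Proof.
  revert P; induction m; intros P HP t0.
  - destruct HP as [c [G [[g Hg] Hc]]].
    exists (fun _ => g); split; [exists g; auto|].
    intro t; rewrite !Hc, !Hg; ring.
  - destruct HP as [c [G [HG Hc]]].
    destruct (IHm G HG t0) as [QG [HQG EQ]].
    exists (fun t => G t + t0 * QG t); split.
    + apply RP_plus; auto. apply RP_scal, RP_lift; auto.
    + intro t; rewrite !Hc.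
      replace (c + t * G t - (c + t0 * G t0)) with ((t - t0) * G t + t0 * (G t - G t0)) by ring.
      rewrite EQ; ring.
Qed.

Lemma RP_roots m : forall P (ts : nat -> R), RP m P ->
  (forall i j, (i <= m)%nat -> (j <= m)%nat -> i <> j -> ts i <> ts j) ->
  (forall i, (i <= m)%nat -> P (ts i) = 0) -> forall t, P t = 0.
Proof.
  induction m; intros P ts HP Hd Hr t.
  - destruct HP as [c Hc]. rewrite Hc. rewrite <- (Hc (ts O)). apply Hr; lia.
  - destruct (RP_factor m P HP (ts O)) as [Q [HQ EQ]].
    assert (H0 : P (ts O) = 0) by (apply Hr; lia).
    assert (HQ0 : forall t, Q t = 0).
    { apply (IHm Q (fun i => ts (S i))); auto.
      - intros i j Hi Hj Hij; apply Hd; lia.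
      - intros i Hi. specialize (EQ (ts (S i))). rewrite H0, Hr in EQ by lia.
        assert (ts (S i) - ts O <> 0).
        { intro E. apply (Hd (S i) O); try lia. lra. }
        assert (E2 : (ts (S i) - ts O) * Q (ts (S i)) = 0) by lra.
        apply Rmult_integral in E2; destruct E2; [contradiction| auto]. }
    specialize (EQ t). rewrite HQ0, H0 in EQ. lra.
Qed.

Ltac cunf := unfold seg_param, Cmult, Cplus, Cminus, Copp, RtoC; simpl.

Lemma Cpown_RP a b k :
  RP k (fun t => fst (Cpown (seg_param a b t) k)) /\
  RP k (fun t => snd (Cpown (seg_param a b t) k)).
Proof.
  induction k as [|k [H1 H2]].
  - split; [exists 1 | exists 0]; intro; reflexivity.
  - split.
    + apply RP_ext with (fun t => (fst a + t * (fst b - fst a)) * fst (Cpown (seg_param a b t) k)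
          + (-1) * ((snd a + t * (snd b - snd a)) * snd (Cpown (seg_param a b t) k))).
      * intro t; simpl Cpown. cunf. ring.
      * apply RP_plus; [apply RP_mul_lin; auto | apply RP_scal, RP_mul_lin; auto].
    + apply RP_ext with (fun t => (fst a + t * (fst b - fst a)) * snd (Cpown (seg_param a b t) k)
          + ((snd a + t * (snd b - snd a)) * fst (Cpown (seg_param a b t) k))).
      * intro t; simpl Cpown. cunf. ring.
      * apply RP_plus; apply RP_mul_lin; auto.
Qed.

Lemma poly_RP a b c m :
  RP m (fun t => fst (poly_eval c m (seg_param a b t))) /\
  RP m (fun t => snd (poly_eval c m (seg_param a b t))).
Proof.
  induction m as [|m [H1 H2]].
  - split; [exists (fst (c O)) | exists (snd (c O))]; intro; reflexivity.
  - destruct (Cpown_RP a b (S m)) as [P1 P2].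
    split.
    + apply RP_ext with (fun t => fst (poly_eval c m (seg_param a b t)) +
         (fst (c (S m)) * fst (Cpown (seg_param a b t) (S m)) +
          (- snd (c (S m))) * snd (Cpown (seg_param a b t) (S m)))).
      * intro t. change (poly_eval c (S m) ?z) with (Cplus (poly_eval c m z) (Cmult (c (S m)) (Cpown z (S m)))).
        set (Z := Cpown _ (S m)). unfold Cplus, Cmult; simpl. ring.
      * apply RP_plus; [apply RP_lift; auto| apply RP_plus; apply RP_scal; auto].
    + apply RP_ext with (fun t => snd (poly_eval c m (seg_param a b t)) +
         (fst (c (S m)) * snd (Cpown (seg_param a b t) (S m)) +
          (snd (c (S m))) * fst (Cpown (seg_param a b t) (S m)))).
      * intro t. change (poly_eval c (S m) ?z) with (Cplus (poly_eval c m z) (Cmult (c (S m)) (Cpown z (S m)))).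
        set (Z := Cpown _ (S m)). unfold Cplus, Cmult; simpl. ring.
      * apply RP_plus; [apply RP_lift; auto| apply RP_plus; apply RP_scal; auto].
Qed.

Definition clamp x := Rmax 0 (Rmin 1 x).
Lemma clamp_in x : 0 <= clamp x <= 1.
Proof. unfold clamp, Rmax, Rmin; repeat destruct Rle_dec; lra. Qed.
Lemma clamp_id x : 0 <= x <= 1 -> clamp x = x.
Proof. unfold clamp, Rmax, Rmin; repeat destruct Rle_dec; lra. Qed.
Lemma clamp_lip x y : Rabs (clamp y + - clamp x) <= Rabs (y + - x).
Proof.
  unfold clamp, Rmax, Rmin; repeat destruct Rle_dec;
  repeat match goal with |- context [Rabs ?z] => destruct (Rcase_abs z) as [?|?];
     [rewrite (Rabs_left z) by lra | rewrite (Rabs_right z) by lra] end; lra.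
Qed.

Lemma IVT_psi (psi : R -> R) :
  (forall t, 0 <= t <= 1 ->
     filterlim psi (within (fun s => 0 <= s <= 1) (locally t)) (locally (psi t))) ->
  forall v, psi 0 <= v <= psi 1 -> {t | 0 <= t <= 1 /\ psi t = v}.
Proof.
  intros Hc v Hv.
  set (h := fun x => psi (clamp x) - v).
  assert (Ch : continuity h).
  { intro x. unfold h. apply continuity_pt_minus.
    - apply continuity_pt_filterlim.
      apply filterlim_comp with (G := within (fun s => 0 <= s <= 1) (locally (clamp x))).
      + intros P [eps HP]. exists eps; intros y Hy. apply HP.
        * unfold ball in *; simpl in *; unfold AbsRing_ball in *; simpl in *.
          unfold abs, minus, plus, opp in *; simpl in *.
          eapply Rle_lt_trans; [apply clamp_lip | exact Hy].
        * apply clamp_in.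
      + apply Hc, clamp_in.
    - apply continuity_pt_const; intros ? ?; reflexivity. }
  destruct (IVT_cor h 0 1 Ch ltac:(lra)) as [z [Hz Ez]].
  { unfold h; rewrite !clamp_id by lra. nra. }
  exists z; split; auto. unfold h in Ez; rewrite clamp_id in Ez; auto; lra.
Qed.

Lemma polar_u (u : C) : u <> RtoC 0 ->
  exists th, fst u = Cmod u * cos th /\ snd u = Cmod u * sin th.
Proof.
  intro Hu.
  assert (Hr : 0 < Cmod u) by (apply Cmod_gt_0; auto).
  assert (Hr2 : Cmod u * Cmod u = fst u ^ 2 + snd u ^ 2).
  { unfold Cmod. rewrite sqrt_sqrt; auto. nra. }
  pose proof (Rmax_Cmod u) as Hm.
  assert (Hx : Rabs (fst u) <= Cmod u) by (eapply Rle_trans; [apply Rmax_l| exact Hm]).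
  set (c := fst u / Cmod u).
  assert (Hc : -1 <= c <= 1).
  { unfold c. assert (Hx' : - Cmod u <= fst u <= Cmod u) by
      (destruct (Rcase_abs (fst u)); [rewrite Rabs_left in Hx|rewrite Rabs_right in Hx]; lra).
    split; [apply Rmult_le_reg_r with (Cmod u); auto; unfold Rdiv; rewrite Rmult_assoc, Rinv_l; lra
           |apply Rmult_le_reg_r with (Cmod u); auto; unfold Rdiv; rewrite Rmult_assoc, Rinv_l; lra]. }
  assert (Hs : 1 - c² = (snd u / Cmod u)²).
  { unfold c, Rsqr. apply Rmult_eq_reg_r with (Cmod u * Cmod u); [|nra].
    field_simplify; try lra. }
  destruct (Rle_dec 0 (snd u)) as [Hy|Hy].
  - exists (acos c). rewrite cos_acos, sin_acos, Hs by auto.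
    rewrite sqrt_Rsqr by (apply Rdiv_le_0_compat; lra).
    unfold c; split; field; lra.
  - exists (- acos c). rewrite cos_neg, sin_neg, cos_acos, sin_acos, Hs, sqrt_Rsqr_abs by auto.

    rewrite Rabs_left.
    + unfold c; split; field; lra.
    + unfold Rdiv. pose proof (Rinv_0_lt_compat _ Hr). nra.
Qed.

Theorem lemma5p1 (a b : C) (m : nat) (f g : C -> C) (u : C) :
  a <> b ->
  poly_deg_le m f ->
  continuous_on_seg a b g ->
  u <> RtoC 0 ->
  (forall z, on_seg a b z -> exists r : R, g z = Cmult (RtoC r) u) ->
  (forall z, on_seg a b z -> Cplus (f z) (g z) <> RtoC 0) ->
  forall psi : R -> R, is_arg_lift (fun z => Cplus (f z) (g z)) a b psi ->
    winding_from_lift psi < (INR m + 1) / 2.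
Proof.
  intros Hab [c Hf] Hg Hu Hline Hnz psi [Hpc Hpe].
  destruct (polar_u u Hu) as [th [Hux Huy]].
  pose proof PI_RGT_0 as HPI.
  assert (Hur : 0 < Cmod u) by (apply Cmod_gt_0; auto).
  set (p := fun t => fst u * snd (f (seg_param a b t)) - snd u * fst (f (seg_param a b t))).
  assert (Hp : RP m p).
  { destruct (poly_RP a b c m) as [P1 P2].
    apply RP_ext with (fun t => fst u * snd (poly_eval c m (seg_param a b t)) +
       (- snd u) * fst (poly_eval c m (seg_param a b t))).
    - intro t; unfold p; rewrite Hf; ring.
    - apply RP_plus; apply RP_scal; auto. }
  assert (key : forall t, 0 <= t <= 1 ->
     p t = Cmod u * Cmod (Cplus (f (seg_param a b t)) (g (seg_param a b t))) * sin (psi t - th)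
     /\ 0 < Cmod (Cplus (f (seg_param a b t)) (g (seg_param a b t)))).
  { intros t Ht.
    assert (Hon : on_seg a b (seg_param a b t)) by (exists t; split; auto).
    destruct (Hline _ Hon) as [r Hr].
    specialize (Hpe t Ht); simpl in Hpe.
    remember (Cplus (f (seg_param a b t)) (g (seg_param a b t))) as w eqn:Ew.
    assert (Hw : 0 < Cmod w) by (apply Cmod_gt_0; rewrite Ew; apply Hnz; auto).
    assert (E1 := f_equal fst Hpe). assert (E2 := f_equal snd Hpe).
    unfold Cmult, RtoC in E1, E2; simpl in E1, E2.
    assert (Hfw : fst w = Cmod w * cos (psi t)).
    { rewrite <- E1. field. lra. }
    assert (Hsw : snd w = Cmod w * sin (psi t)).
    { rewrite <- E2. field. lra. }
    split; auto.
    assert (Hpw : p t = fst u * snd w - snd u * fst w).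
    { unfold p. rewrite Ew, Hr. unfold Cplus, Cmult, RtoC; simpl. ring. }
    rewrite Hpw, Hfw, Hsw, Hux, Huy, sin_minus. ring. }
  unfold winding_from_lift.
  apply Rnot_le_lt; intro Hge.
  assert (Hd : (INR m + 1) * PI <= psi 1 - psi 0).
  { set (W := (psi 1 - psi 0) / (2 * PI)) in *.
    assert (E : psi 1 - psi 0 = W * (2 * PI)) by (unfold W; field; lra).
    rewrite E. nra. }
  pose proof (pos_INR m) as Hm0.
  set (n0 := up ((psi 0 - th) / PI)).
  destruct (archimed ((psi 0 - th) / PI)) as [A1 A2]. fold n0 in A1, A2.
  assert (B1 : psi 0 - th < IZR n0 * PI).
  { replace (psi 0 - th) with ((psi 0 - th) / PI * PI) by (field; lra). nra. }
  assert (B2 : IZR n0 * PI <= psi 0 - th + PI).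
  { replace (psi 0 - th) with ((psi 0 - th) / PI * PI) by (field; lra). nra. }
  assert (X : forall j : nat, {t | (j <= m)%nat ->
       0 <= t <= 1 /\ psi t = th + IZR (n0 + Z.of_nat j) * PI}).
  { intro j. destruct (Compare_dec.le_dec j m) as [Hj|Hj].
    - destruct (IVT_psi psi Hpc (th + IZR (n0 + Z.of_nat j) * PI)) as [t Ht].
      + rewrite plus_IZR, <- INR_IZR_INZ.
        pose proof (le_INR _ _ Hj). pose proof (pos_INR j).
        assert (0 <= INR j * PI) by nra. assert (INR j * PI <= INR m * PI) by nra.
        split; nra.
      + exists t; auto.
    - exists 0; intro; contradiction. }
  set (ts := fun j => proj1_sig (X j)).
  assert (Hp0 : forall t, p t = 0).
  { apply (RP_roots m p ts Hp).
    - intros i j Hi Hj Hij E.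
      destruct (proj2_sig (X i) Hi) as [_ Ei].
      destruct (proj2_sig (X j) Hj) as [_ Ej].
      unfold ts in E. rewrite E in Ei. rewrite Ei in Ej.
      assert (IZR (n0 + Z.of_nat i) = IZR (n0 + Z.of_nat j)).
      { apply Rmult_eq_reg_r with PI; lra. }
      apply eq_IZR in H. lia.
    - intros j Hj. destruct (proj2_sig (X j) Hj) as [Hin Ej].
      destruct (key _ Hin) as [K _]. unfold ts. rewrite K, Ej.
      replace (th + IZR (n0 + Z.of_nat j) * PI - th) with (IZR (n0 + Z.of_nat j) * PI) by ring.
      rewrite sin_eq_0_1; [ring| eexists; reflexivity]. }
  assert (Hex : exists t, 0 <= t <= 1 /\ sin (psi t - th) <> 0).
  { destruct (Req_dec (sin (psi 0 - th)) 0) as [E|E].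
    - destruct (sin_eq_0_0 _ E) as [k Hk].
      destruct (IVT_psi psi Hpc (psi 0 + PI / 2)) as [t [Ht Et]].
      { split; nra. }
      exists t; split; auto. rewrite Et.
      intro E'. destruct (sin_eq_0_0 _ E') as [k' Hk'].
      assert (E3 : IZR (2 * k + 1) * PI = IZR (2 * k') * PI).
      { rewrite plus_IZR, !mult_IZR. simpl IZR. lra. }
      apply Rmult_eq_reg_r in E3; [|lra]. apply eq_IZR in E3. lia.
    - exists 0; split; [lra| auto]. }
  destruct Hex as [t [Ht Hs]].
  destruct (key t Ht) as [K Hw].
  rewrite Hp0 in K. symmetry in K.
  apply Rmult_integral in K. destruct K as [K|K]; [|contradiction].
  apply Rmult_integral in K. destruct K; lra.
Qed.
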